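(* There is an absolute constant $c_3>0$ such that the following holds. Let $Q\in\mathbb{N}$, $\mathcal{S}\subseteq B(0,Q^{1/2})\cap(\mathbb{Z}[i]\setminus\{0\})$, $\Delta>0$, $\tau=\Delta^{-1/4}$. Let $b,r\in\mathbb{Z}[i]$ with $(b,r)=1$ and $0<|r|\le\tau$, and let $z\in\mathbb{C}$ with $\Delta^{1/2}\le|z|<\frac{2}{|r|\tau}$. Let $\overline{b}\in\mathbb{Z}[i]$ satisfy $\overline{b}b\equiv1\bmod r$. Then $$P\Big(\frac{b}{r}+z\Big)\le 16+c_3\sum_{t\mid r}\ \sum_{\substack{m\in\mathbb{Z}[i],\ 0<|m|\le\frac{3|rz|\sqrt{Q}}{|t|}\\ (m,\frac{r}{t})=1}}A_t\Big(\frac{\sqrt{Q\Delta}}{|z||t|},\frac{r}{t},-\overline{b}m\Big).$$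
   Context: $\mathbb{Z}[i]$ are the Gaussian integers; $B(y,u)=\{w\in\mathbb{C}:|w-y|\le u\}$. The sum over $t\mid r$ runs over a maximal set of mutually non-associate divisors $t$ of $r$ in $\mathbb{Z}[i]$. For $\alpha\in\mathbb{C}$, $$P(\alpha)=\Big|\Big\{(a,q)\in\mathbb{Z}[i]\times\mathcal{S}:\ (a,q)=1,\ \Big|\frac{a}{q}-\alpha\Big|\le\Delta^{1/2}\Big\}\Big|.$$ For $t\in\mathbb{Z}[i]\setminus\{0\}$, $\mathcal{S}_t=\{q\in\mathbb{Z}[i]:tq\in\mathcal{S}\}$, and for $u\ge0$, $k\in\mathbb{Z}[i]\setminus\{0\}$, $l\in\mathbb{Z}[i]$, $$A_t(u,k,l)=\sup_{y\in\mathbb{C},\ |y|\le\sqrt{Q}/|t|}\big|\{q\in\mathcal{S}_t\cap B(y,u):\ q\equiv l\bmod k\}\big|.$$ *)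

(* Defs.v *)
From HB Require Import structures.
From mathcomp Require Import all_boot all_order all_algebra.
From mathcomp Require Import complex.
From mathcomp Require Import boolp classical_sets cardinality reals.
From mathcomp Require Import Rstruct.
From mathcomp Require Import finmap.
Set Implicit Arguments. Unset Strict Implicit. Unset Printing Implicit Defensive.
Import Order.TTheory GRing.Theory Num.Theory.
Local Open Scope ring_scope.
Local Open Scope classical_set_scope.

Notation RR := Rdefinitions.R.
Definition CC : Type := complex RR.

Definition cabs (w : CC) : RR := Normc.normc w.

Definition isGI (w : CC) : Prop := (complex.Re w \is a Num.int) /\ (complex.Im w \is a Num.int).

Definition gdvd (t r : CC) : Prop := exists2 k : CC, isGI k & r = t * k.

Definition gunit (u : CC) : Prop := isGI u /\ gdvd u 1.

Definition gcoprime (a q : CC) : Prop :=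
  forall d : CC, isGI d -> gdvd d a -> gdvd d q -> gunit d.

Definition gcong (q l k : CC) : Prop := gdvd k (q - l).

Definition gassoc (t t' : CC) : Prop := exists2 u : CC, gunit u & t' = u * t.

Definition nonassoc_divisors (r : CC) (T : seq CC) : Prop :=
  [/\ uniq T,
      (forall t, t \in T -> isGI t /\ gdvd t r),
      (forall t t', t \in T -> t' \in T -> gassoc t t' -> t = t') &
      (forall d, isGI d -> gdvd d r -> exists2 t, t \in T & gassoc d t)].

Definition cball (y : CC) (u : RR) : set CC := [set w | cabs (w - y) <= u].

Definition ncard (A : set (CC * CC)) : nat := #|` fset_set A|.
Definition ncard1 (A : set CC) : nat := #|` fset_set A|.

Definition Pcount (S : set CC) (Delta : RR) (alpha : CC) : nat :=
  ncard [set aq : CC * CC | [/\ isGI aq.1, S aq.2, gcoprime aq.1 aq.2 &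
                             cabs (aq.1 / aq.2 - alpha) <= Num.sqrt Delta]].

Definition Sdiv (S : set CC) (t : CC) : set CC := [set q | isGI q /\ S (t * q)].

Definition Acount (Q : nat) (S : set CC) (t : CC) (u : RR) (k l : CC) : RR :=
  sup [set (ncard1 [set q | [/\ Sdiv S t q, cball y u q & gcong q l k]])%:R
      | y in [set y : CC | cabs y <= Num.sqrt (Q%:R) / cabs t]].

(* Main.v *)
Require Import Defs.
From HB Require Import structures.
From mathcomp Require Import all_boot all_order all_algebra.
From mathcomp Require Import complex.
From mathcomp Require Import boolp classical_sets cardinality reals.
From mathcomp Require Import Rstruct.
From mathcomp Require Import finmap.
From mathcomp Require Import ring lra zify.
Import Order.TTheory GRing.Theory Num.Theory.
Set Implicit Arguments. Unset Strict Implicit. Unset Printing Implicit Defensive.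
Local Open Scope ring_scope.
Local Open Scope classical_set_scope.

Definition NN (w : CC) : RR := complex.Re w ^+ 2 + complex.Im w ^+ 2.

Lemma NN_ge0 w : 0 <= NN w.
Proof. by rewrite /NN addr_ge0 ?sqr_ge0. Qed.

Lemma cabsE w : cabs w = Num.sqrt (NN w).
Proof. by case: w. Qed.

Lemma cabs_ge0 w : 0 <= cabs w.
Proof. by rewrite cabsE sqrtr_ge0. Qed.

Lemma cabs2 w : cabs w ^+ 2 = NN w.
Proof. by rewrite cabsE sqr_sqrtr // NN_ge0. Qed.

Lemma ReM (x y : CC) : complex.Re (x * y) = complex.Re x * complex.Re y - complex.Im x * complex.Im y.
Proof. by case: x => a b; case: y => c d. Qed.
Lemma ImM (x y : CC) : complex.Im (x * y) = complex.Re x * complex.Im y + complex.Im x * complex.Re y.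
Proof. by case: x => a b; case: y => c d. Qed.
Lemma ReD (x y : CC) : complex.Re (x + y) = complex.Re x + complex.Re y.
Proof. by case: x => a b; case: y => c d. Qed.
Lemma ImD (x y : CC) : complex.Im (x + y) = complex.Im x + complex.Im y.
Proof. by case: x => a b; case: y => c d. Qed.
Lemma ReN (x : CC) : complex.Re (- x) = - complex.Re x.
Proof. by case: x. Qed.
Lemma ImN (x : CC) : complex.Im (- x) = - complex.Im x.
Proof. by case: x. Qed.

Lemma NNM x y : NN (x * y) = NN x * NN y.
Proof. rewrite /NN ReM ImM; ring. Qed.

Lemma cabsM x y : cabs (x * y) = cabs x * cabs y.
Proof. exact: Normc.normcM. Qed.
Lemma cabsV x : cabs (x^-1) = (cabs x)^-1.
Proof. exact: Normc.normcV. Qed.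
Lemma cabs_div x y : cabs (x / y) = cabs x / cabs y.
Proof. by rewrite cabsM cabsV. Qed.
Lemma cabsD x y : cabs (x + y) <= cabs x + cabs y.
Proof. exact: le_normcD. Qed.
Lemma cabsN x : cabs (- x) = cabs x.
Proof. exact: normcN. Qed.
Lemma cabs_eq0 x : (cabs x == 0) = (x == 0).
Proof.
apply/eqP/eqP; first exact: Normc.eq0_normc.
by move=> ->; exact: Normc.normc0.
Qed.
Lemma cabs_gt0 x : x != 0 -> 0 < cabs x.
Proof. by move=> hx; rewrite lt_def cabs_eq0 hx cabs_ge0. Qed.
Lemma cabs1 : cabs 1 = 1.
Proof. exact: Normc.normc1. Qed.
Lemma cabsB x y : cabs (x - y) = cabs (y - x).
Proof. by rewrite -cabsN opprB. Qed.

Lemma GI0 : isGI 0. Proof. by split; rewrite /= rpred0. Qed.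
Lemma GI1 : isGI 1. Proof. by split; rewrite /= ?rpred0 ?rpred1. Qed.
Lemma GIM x y : isGI x -> isGI y -> isGI (x * y).
Proof. by case=> ??[??]; split; rewrite ?ReM ?ImM ?rpredB ?rpredD ?rpredM. Qed.
Lemma GID x y : isGI x -> isGI y -> isGI (x + y).
Proof. by case=> ??[??]; split; rewrite ?ReD ?ImD; apply: rpredD. Qed.
Lemma GIN x : isGI x -> isGI (- x).
Proof. by case=> ??; split; rewrite ?ReN ?ImN rpredN. Qed.
Lemma GIB x y : isGI x -> isGI y -> isGI (x - y).
Proof. by move=> hx hy; apply: GID => //; apply: GIN. Qed.
Lemma GIJ x : isGI x -> isGI (x^*)%C.
Proof. by case: x => a b [/= ??]; split => //=; rewrite rpredN. Qed.
Lemma mulJ x : x * (x^*)%C = (NN x)%:C%C.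
Proof. by case: x => a b; rewrite /NN /=; apply/eqP; rewrite eq_complex /=; apply/andP; split; apply/eqP; ring. Qed.

Lemma NN_int x : isGI x -> NN x \is a Num.int.
Proof. by case=> ??; rewrite /NN rpredD // rpredX. Qed.
Lemma NN_eq0 x : (NN x == 0) = (x == 0).
Proof. by rewrite -cabs_eq0 cabsE sqrtr_eq0 le_eqVlt ltNge NN_ge0 orbF. Qed.
Lemma NN_ge1 x : isGI x -> x != 0 -> 1 <= NN x.
Proof.
move=> /NN_int /intrP[k hk] nz.
have: NN x != 0 by rewrite NN_eq0.
have := NN_ge0 x; rewrite hk ler0z intr_eq0 => k0 kn0.
by rewrite ler1z; lia.
Qed.

Lemma gdvd_refl x : gdvd x x.
Proof. by exists 1; [exact: GI1 | rewrite mulr1]. Qed.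
Lemma gdvd0 x : gdvd x 0.
Proof. by exists 0; [exact: GI0 | rewrite mulr0]. Qed.
Lemma gdvdD d a b : gdvd d a -> gdvd d b -> gdvd d (a + b).
Proof. by case=> k hk -> [l hl ->]; exists (k + l); [exact: GID | rewrite mulrDr]. Qed.
Lemma gdvdN d a : gdvd d a -> gdvd d (- a).
Proof. by case=> k hk ->; exists (- k); [exact: GIN | rewrite mulrN]. Qed.
Lemma gdvdB d a b : gdvd d a -> gdvd d b -> gdvd d (a - b).
Proof. by move=> ha hb; apply: gdvdD => //; apply: gdvdN. Qed.
Lemma gdvdMr d a c : isGI c -> gdvd d a -> gdvd d (a * c).
Proof. by move=> hc [k hk ->]; exists (k * c); [exact: GIM | rewrite mulrA]. Qed.
Lemma gdvdMl d a c : isGI c -> gdvd d a -> gdvd d (c * a).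
Proof. by move=> hc ha; rewrite mulrC; apply: gdvdMr. Qed.
Lemma gdvd_trans d e a : gdvd d e -> gdvd e a -> gdvd d a.
Proof. by case=> k hk -> [l hl ->]; exists (k * l); [exact: GIM | rewrite mulrA]. Qed.
Lemma gdvd_mul2l e d a : gdvd d a -> gdvd (e * d) (e * a).
Proof. by case=> k hk ->; exists k => //; rewrite mulrA. Qed.

Lemma NN_dvd d r : isGI r -> r != 0 -> gdvd d r -> NN d <= NN r.
Proof.
move=> _ rn0 [k hk er].
have kn0 : k != 0 by apply: contraNneq rn0 => k0; rewrite er k0 mulr0.
rewrite er NNM -{1}[NN d]mulr1 ler_wpM2l ?NN_ge0 //.
exact: NN_ge1.
Qed.

Lemma unitP d : isGI d -> d != 0 -> NN d <= 1 -> gunit d.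
Proof.
move=> hd dn0 hle; split => //.
have h1 : NN d = 1 by apply/eqP; rewrite eq_le hle NN_ge1.
exists (d^*)%C; first exact: GIJ.
by rewrite mulJ h1.
Qed.

Lemma gunit_NN u : gunit u -> NN u <= 1.
Proof.
case=> hu [k hk e1].
have kn0 : k != 0 by apply/eqP => k0; move: e1; rewrite k0 mulr0; apply/eqP; exact: oner_neq0.
have : NN u * NN k = 1 by rewrite -NNM -e1 /NN /=; rewrite expr0n /= addr0 expr1n.
move=> h; have := NN_ge1 hk kn0.
have := NN_ge0 u; nra.
Qed.

Lemma gunit_neq0 u : gunit u -> u != 0.
Proof.
by case=> _ [k _ e1]; apply/eqP => u0; move: e1; rewrite u0 mul0r => /eqP; rewrite oner_eq0.
Qed.

Lemma cabs_le1 u : NN u <= 1 -> cabs u <= 1.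
Proof. by move=> h; rewrite cabsE -sqrtr1 ler_sqrt. Qed.

Definition Lz (n : nat) : seq int := [seq (i%:Z - n%:Z) | i <- iota 0 (2 * n + 1)].
Definition Lc (n : nat) : seq CC := [seq (Complex x%:~R y%:~R) | x <- Lz n, y <- Lz n].

Lemma size_Lc n : size (Lc n) = ((2 * n + 1) * (2 * n + 1))%N.
Proof. by rewrite /Lc size_allpairs /Lz size_map size_iota. Qed.

Lemma in_Lz n (k : int) : (- (n%:Z) <= k <= n%:Z)%R -> k \in Lz n.
Proof.
move=> /andP[h1 h2].
have e : k = (absz (k + n%:Z)%R)%:Z - n%:Z by lia.
rewrite e; apply: map_f; rewrite mem_iota; lia.
Qed.

Lemma int_bound (x : RR) n : x \is a Num.int -> x ^+ 2 <= n%:R ^+ 2 ->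
  exists k : int, x = k%:~R /\ (- (n%:Z) <= k <= n%:Z)%R.
Proof.
move=> /intrP[k ->] h; exists k; split => //.
have h' : (k * k <= n%:Z * n%:Z)%R.
  by rewrite -(ler_int RR) !intrM -!expr2 -[(n%:Z)%:~R]/(n%:R).
apply/andP; split; nia.
Qed.

Lemma GI_in_Lc n w : isGI w -> cabs w <= n%:R -> w \in Lc n.
Proof.
case=> hr hi hc.
have hN : NN w <= n%:R ^+ 2.
  by rewrite -cabs2 lerXn2r // ?nnegrE ?cabs_ge0.
have hr2 : complex.Re w ^+ 2 <= n%:R ^+ 2.
  by apply: le_trans hN; rewrite /NN lerDl sqr_ge0.
have hi2 : complex.Im w ^+ 2 <= n%:R ^+ 2.
  by apply: le_trans hN; rewrite /NN lerDr sqr_ge0.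
have [k [ek hk]] := int_bound hr hr2.
have [l [el hl]] := int_bound hi hi2.
have -> : w = Complex k%:~R l%:~R by rewrite -ek -el; case: (w).
by apply: allpairs_f; apply: in_Lz.
Qed.

Lemma finite_GI_ball (R : RR) : finite_set [set w | isGI w /\ cabs w <= R].
Proof.
have [n hn] : exists n : nat, R <= n%:R.
  case: (lerP R 0) => h; first by exists 0%N; rewrite h.
  exists (Num.Def.archi_bound R); apply/ltW/archi_boundP/ltW/h.
apply: (@sub_finite_set _ _ [set` Lc n]); last exact: finite_seq.
move=> w [hw hc] /=; apply: GI_in_Lc => //; exact: le_trans hn.
Qed.

Lemma mem_fset_setP {T : choiceType} (A : set T) x : x \in fset_set A -> A x.
Proof.
case: (pselect (finite_set A)) => hA; first by rewrite in_fset_set // in_setE.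
by rewrite /fset_set; case: pselect => // ?; rewrite in_fset0.
Qed.

Lemma cardfs_size {T : choiceType} (A : {fset T}) : #|` A| = size A.
Proof. by rewrite card_fset_sum1 sum1_size. Qed.

Lemma card_le_inj {T T' : choiceType} (s : seq T) (f : T -> T') (B : set T') :
  uniq s -> {in s &, injective f} -> (forall x, x \in s -> B (f x)) ->
  finite_set B -> (size s <= #|` fset_set B|)%N.
Proof.
move=> us inj hB fB.
rewrite -(size_map f); apply: uniq_leq_size.
  by rewrite map_inj_in_uniq.
by move=> y /mapP[x xs ->]; rewrite in_fset_set // in_setE; apply: hB.
Qed.

Lemma cabs_leNN x y : (cabs x <= cabs y) = (NN x <= NN y).
Proof. by rewrite !cabsE ler_sqrt // NN_ge0. Qed.

Definition proj (Rr : RR) (y0 : CC) : CC :=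
  if cabs y0 <= Rr then y0 else (Complex (Rr / cabs y0) 0) * y0.

Lemma proj_in Rr y0 : 0 <= Rr -> cabs (proj Rr y0) <= Rr.
Proof.
rewrite /proj; case: ifP => // /negbT; rewrite -ltNge => h hR.
have n0 : 0 < cabs y0 by apply: le_lt_trans h.
rewrite cabsM [cabs (Complex _ _)]cabsE /NN /= expr0n /= addr0 sqrtr_sqr.
rewrite ger0_norm ?divr_ge0 ?cabs_ge0 // divfK //; exact: lt0r_neq0.
Qed.

Lemma proj_close Rr y0 w : 0 <= Rr -> cabs w <= Rr -> cabs (w - proj Rr y0) <= cabs (w - y0).
Proof.
rewrite /proj; case: ifP => // /negbT; rewrite -ltNge => h hR hw.
have n0 : 0 < cabs y0 by apply: le_lt_trans h.
set s := Rr / cabs y0.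
have s0 : 0 <= s by rewrite divr_ge0 // ltW.
have s1 : s < 1 by rewrite ltr_pdivrMr // mul1r.
have hn2 : NN y0 = cabs y0 ^+ 2 by rewrite cabs2.
have hw2 : NN w <= (s * cabs y0) ^+ 2.
  by rewrite -cabs2 /s divfK ?lt0r_neq0 // lerXn2r // ?nnegrE ?cabs_ge0.
rewrite cabs_leNN.
clearbody s; move: (cabs y0) hn2 hw2 => n hn2 hw2.
move: hn2 hw2; case: (w) => c d; case: (y0) => a b.
rewrite /NN /= => hn2 hw2.
rewrite !mul0r !subr0 !addr0 mulrC [s * b]mulrC.
have cs : (a * c + b * d) <= s * n ^+ 2.
  have h1 : (a * c + b * d) ^+ 2 <= (n ^+ 2) * ((s * n) ^+ 2).
    rewrite -hn2; apply: le_trans (_ : (a ^+ 2 + b ^+ 2) * (c ^+ 2 + d ^+ 2) <= _).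
      have : 0 <= (a * d - b * c) ^+ 2 by apply: sqr_ge0.
      by move=> hh; nra.
    by rewrite ler_wpM2l // addr_ge0 // sqr_ge0.
  have h2 : 0 <= s * n ^+ 2 by rewrite mulr_ge0 // sqr_ge0.
  have h3 : (s * n ^+ 2) ^+ 2 = n ^+ 2 * (s * n) ^+ 2 by ring.
  rewrite -h3 in h1.
  case: (lerP (a * c + b * d) 0) => hx; first exact: le_trans hx h2.
  nra.
have k2 : 0 <= (1 + s) * (a ^+ 2 + b ^+ 2) - 2 * (a * c + b * d).
  rewrite hn2; have : 0 <= (1 - s) * n ^+ 2 by rewrite mulr_ge0 ?sqr_ge0 // subr_ge0 ltW.
  lra.
have k1 : 0 <= (1 - s) * ((1 + s) * (a ^+ 2 + b ^+ 2) - 2 * (a * c + b * d)).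
  by rewrite mulr_ge0 // subr_ge0 ltW.
rewrite -subr_ge0 (_ : _ - _ = (1 - s) * ((1 + s) * (a ^+ 2 + b ^+ 2) - 2 * (a * c + b * d))) //; ring.
Qed.

Lemma NN_nat x : isGI x -> exists n : nat, NN x = n%:R.
Proof.
move=> /NN_int hi; apply/natrP; rewrite natrEint hi; exact: NN_ge0.
Qed.

Lemma exists_t r (T : seq CC) q b bbar a k0 :
  isGI r -> r != 0 -> isGI q -> q != 0 -> isGI a -> isGI b -> isGI bbar -> isGI k0 ->
  bbar * b - 1 = r * k0 -> nonassoc_divisors r T ->
  exists t, [/\ t \in T, t != 0, gdvd t q, gdvd t r & gcoprime ((a * r - b * q) / t) (r / t)].
Proof.
move=> hr rn0 hq qn0 ha hb hbb hk0 ek [_ hT1 _ hT4].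
pose P := fun n : nat => `[< exists d, [/\ isGI d, gdvd d q, gdvd d r & NN d = n%:R] >].
have exP : exists n, P n.
  exists 1%N; apply/asboolP; exists 1; split; first exact: GI1.
  - by exists q => //; rewrite mul1r.
  - by exists r => //; rewrite mul1r.
  by rewrite /NN /= expr0n /= addr0 expr1n.
have [B hB] := NN_nat hr.
have ubP : forall n, P n -> (n <= B)%N.
  move=> n /asboolP[d [hd _ hdr en]].
  have := NN_dvd hr rn0 hdr; rewrite en hB ler_nat //.
case: (ex_maxnP exP ubP) => nm /asboolP[d [hd hdq hdr en]] hmax.
have dmax : forall d', isGI d' -> gdvd d' q -> gdvd d' r -> NN d' <= NN d.
  move=> d' hd' h1 h2; have [n' en'] := NN_nat hd'.
  have : P n' by apply/asboolP; exists d'.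
  by move=> /hmax; rewrite en en' ler_nat.
have [t tT [u hu et]] := hT4 d hd hdr.
have [ut [v hv euv]] := hu.
have [ht _] := hT1 t tT.
have un0 : u != 0 := gunit_neq0 hu.
have tdvd : forall x, gdvd d x -> gdvd t x.
  move=> x [k hk ->]; exists (v * k); first exact: GIM.
  by rewrite et; transitivity ((u * v) * (d * k)); [rewrite -euv mul1r | ring].
have htq := tdvd _ hdq; have htr := tdvd _ hdr.
have tn0 : t != 0.
  by apply: contraNneq rn0 => t0; case: htr => k _ ->; rewrite t0 mul0r.
have hNt : NN d <= NN t.
  rewrite et NNM -{1}[NN d]mul1r ler_wpM2r ?NN_ge0 //; exact: NN_ge1.
exists t; split => //.
case: htq => kq hkq eq; case: htr => kr hkr er.
have em : (a * r - b * q) / t = a * kr - b * kq.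
  by rewrite er eq (_ : a * (t * kr) - b * (t * kq) = (a * kr - b * kq) * t) ?mulfK //; ring.
have erk : r / t = kr by rewrite er [t * kr]mulrC mulfK.
rewrite em erk => d' hd' h1 h2.
have krn0 : kr != 0 by apply: contraNneq rn0 => k0'; rewrite er k0' mulr0.
have d'n0 : d' != 0 by apply: contraNneq krn0 => d0; case: h2 => k _ ->; rewrite d0 mul0r.
have h3 : gdvd d' (b * kq) by have := gdvdB (gdvdMl ha h2) h1; rewrite opprB addrC subrK.
have h4 : gdvd d' kq.
  have -> : kq = bbar * (b * kq) - kr * (t * k0 * kq).
    have -> : kr * (t * k0 * kq) = (r * k0) * kq by rewrite er; ring.
    by rewrite -ek; ring.
  apply: gdvdB; first exact: gdvdMl.
  by apply: gdvdMr => //; apply: GIM => //; apply: GIM.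
have h5 : NN (t * d') <= NN t.
  apply: le_trans hNt; apply: dmax; first exact: GIM.
  - by rewrite eq; apply: gdvd_mul2l.
  - by rewrite er; apply: gdvd_mul2l.
apply: unitP => //.
move: h5; rewrite NNM => h5.
have tpos : 0 < NN t by rewrite lt_def NN_eq0 tn0 NN_ge0.
by rewrite -(ler_pM2l tpos) mulr1.
Qed.

Lemma count_m0 (F : seq (CC * CC)) r b bbar k0 :
  uniq F -> (forall x, x \in F -> [/\ isGI x.1, isGI x.2, x.2 != 0 & gcoprime x.1 x.2]) ->
  isGI r -> r != 0 -> isGI b -> isGI bbar -> isGI k0 -> bbar * b - 1 = r * k0 ->
  (size [seq x <- F | (x.1 * r - b * x.2 == 0)%R] <= 9)%N.
Proof.
move=> uF hF hr rn0 hb hbb hk0 ek.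
rewrite -(size_map (fun x => x.2 / r)) (_ : 9%N = size (Lc 1)) ; last by rewrite size_Lc.
apply: uniq_leq_size.
  rewrite map_inj_in_uniq ?filter_uniq //.
  move=> [a1 q1] [a2 q2]; rewrite !mem_filter /= => /andP[/eqP m1 _] /andP[/eqP m2 _] e.
  have eq : q1 = q2 by move: e => /(congr1 (fun w => w * r)); rewrite !divfK.
  have ea : a1 * r = a2 * r by move/subr0_eq: m1 => ->; move/subr0_eq: m2 => ->; rewrite eq.
  by rewrite eq (mulIf rn0 ea).
move=> w /mapP[[a q]]; rewrite mem_filter /= => /andP[/eqP m0 xF] ->.
have [ha hq qn0 hco] := hF _ xF.
have ebq : b * q = a * r by move/subr0_eq: m0.
set w0 := bbar * a - k0 * q.
have eqw : q = r * w0.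
  have -> : r * w0 = bbar * (a * r) - (r * k0) * q by rewrite /w0; ring.
  by rewrite -ek -ebq; ring.
have ew : q / r = w0 by rewrite eqw [r * w0]mulrC mulfK.
have hw0 : isGI w0 by apply: GIB; apply: GIM.
have eaw : a = w0 * b.
  apply: (mulIf rn0); rewrite -ebq eqw; ring.
have hu : gunit w0.
  apply: hco => //; first by exists b.
  by exists r => //; rewrite eqw mulrC.
rewrite ew; apply: GI_in_Lc => //.
exact: cabs_le1 (gunit_NN hu).
Qed.

Lemma GI_divt t x : t != 0 -> gdvd t x -> isGI (x / t).
Proof. by move=> tn0 [k hk ->]; rewrite [t * k]mulrC mulfK. Qed.

Lemma m_GI a b q r t : isGI a -> isGI b -> t != 0 -> gdvd t q -> gdvd t r ->
  isGI ((a * r - b * q) / t).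
Proof.
move=> ha hb tn0 hq hr; apply: GI_divt => //.
by apply: gdvdB; apply: gdvdMl.
Qed.

Lemma m_bound (Q : nat) (Delta : RR) a q b r z :
  q != 0 -> r != 0 -> cabs q <= Num.sqrt Q%:R -> Num.sqrt Delta <= cabs z ->
  cabs (a / q - (b / r + z)) <= Num.sqrt Delta ->
  cabs (a * r - b * q) <= 2 * cabs r * cabs z * Num.sqrt Q%:R.
Proof.
move=> qn0 rn0 hq hz hc.
have e : a * r - b * q = (q * r) * ((a / q - (b / r + z)) + z).
  by field; apply/andP; split.
rewrite e cabsM cabsM.
have h1 : cabs (a / q - (b / r + z) + z) <= 2 * cabs z.
  apply: le_trans (cabsD _ _) _; lra.
have h2 : cabs q * cabs r <= Num.sqrt Q%:R * cabs r by rewrite ler_wpM2r // cabs_ge0.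
apply: le_trans (_ : _ <= Num.sqrt Q%:R * cabs r * (2 * cabs z)) _.
  by apply: ler_pM => //; rewrite ?mulr_ge0 ?cabs_ge0.
by rewrite le_eqVlt; apply/orP; left; apply/eqP; ring.
Qed.

Lemma q_ball (Q : nat) (Delta : RR) a q b r z t :
  q != 0 -> r != 0 -> z != 0 -> t != 0 -> cabs q <= Num.sqrt Q%:R ->
  cabs (a / q - (b / r + z)) <= Num.sqrt Delta ->
  cabs (q / t - ((a * r - b * q) / t) / (r * z)) <= Num.sqrt (Q%:R * Delta) / (cabs z * cabs t).
Proof.
move=> qn0 rn0 zn0 tn0 hq hc.
have e : q / t - ((a * r - b * q) / t) / (r * z) = - (q / (z * t)) * (a / q - (b / r + z)).
  by field; rewrite qn0 rn0 zn0 tn0.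
rewrite e cabsM cabsN cabs_div cabsM sqrtrM ?ler0n //.
rewrite mulrAC ler_pM2r ?invr_gt0 ?mulr_gt0 ?cabs_gt0 //.
by apply: ler_pM; rewrite ?cabs_ge0.
Qed.

Lemma q_cong a q b r bbar k0 t :
  isGI a -> isGI bbar -> isGI k0 -> isGI t -> t != 0 -> gdvd t q -> gdvd t r -> bbar * b - 1 = r * k0 ->
  gcong (q / t) (- bbar * ((a * r - b * q) / t)) (r / t).
Proof.
move=> ha hbb hk0 ht tn0 [kq hkq eq] [kr hkr er] ek.
rewrite /gcong eq er.
have e1 : t * kq / t = kq by rewrite [t * kq]mulrC mulfK.
have e2 : t * kr / t = kr by rewrite [t * kr]mulrC mulfK.
have e3 : (a * (t * kr) - b * (t * kq)) / t = a * kr - b * kq.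
  by rewrite (_ : a * (t * kr) - b * (t * kq) = (a * kr - b * kq) * t) ?mulfK //; ring.
rewrite e1 e2 e3.
exists (bbar * a - t * k0 * kq).
  by apply: GIB; apply: GIM => //; apply: GIM.
have ebb : bbar * b = 1 + t * kr * k0 by rewrite -er -ek; ring.
transitivity (kq - kq * (bbar * b) + bbar * a * kr - t * kr * k0 * kq + t * kr * k0 * kq); last first.
  rewrite ebb; ring.
ring.
Qed.

Lemma Sdiv_finite (Q : nat) S t : t != 0 -> (forall q, S q -> cabs q <= Num.sqrt Q%:R) ->
  finite_set (Sdiv S t).
Proof.
move=> tn0 hS; apply: (sub_finite_set _ (finite_GI_ball (Num.sqrt Q%:R / cabs t))).
move=> q [hq /hS]; rewrite cabsM => h; split => //.
by rewrite ler_pdivlMr ?cabs_gt0 // mulrC.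
Qed.

Lemma ncard1_le_Acount (Q : nat) S t u k l y : t != 0 ->
  (forall q, S q -> cabs q <= Num.sqrt Q%:R) -> cabs y <= Num.sqrt Q%:R / cabs t ->
  (ncard1 [set q | [/\ Sdiv S t q, cball y u q & gcong q l k]])%:R <= Acount Q S t u k l.
Proof.
move=> tn0 hS hy; rewrite /Acount.
apply: sup_upper_bound; last by exists y.
split; first by exists (ncard1 [set q | [/\ Sdiv S t q, cball y u q & gcong q l k]])%:R; exists y.
exists (#|` fset_set (Sdiv S t)|)%:R => _ [y' _ <-].
rewrite ler_nat /ncard1.
apply: (card_le_inj (f := id)); first exact: fset_uniq.
- by move=> ? ? _ _ ->.
- by move=> x /mem_fset_setP [].
exact: Sdiv_finite hS.
Qed.

Theorem lemma3 :
  exists c3 : RR, 0 < c3 /\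
  forall (Q : nat) (S : set CC) (Delta : RR),
    (forall q, S q -> [/\ isGI q, q != 0 & cabs q <= Num.sqrt (Q%:R)]) ->
    0 < Delta ->
    let tau : RR := (Num.sqrt (Num.sqrt Delta))^-1 in
    forall (b r : CC), isGI b -> isGI r -> gcoprime b r ->
    0 < cabs r <= tau ->
    forall z : CC, Num.sqrt Delta <= cabs z < 2 / (cabs r * tau) ->
    forall bbar : CC, isGI bbar -> gcong (bbar * b) 1 r ->
    forall T : seq CC, nonassoc_divisors r T ->
    (Pcount S Delta (b / r + z))%:R <=
      16 + c3 * \sum_(t <- T)
                  \sum_(m <- fset_set [set m : CC | [/\ isGI m,
                           0 < cabs m <= 3 * cabs (r * z) * Num.sqrt (Q%:R) / cabs t &
                           gcoprime m (r / t)]])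
                     Acount Q S t (Num.sqrt (Q%:R * Delta) / (cabs z * cabs t))
                            (r / t) (- bbar * m).
Proof.
exists 1; split; first exact: ltr01.
move=> Q S Delta hS hD tau b r hb hr hbr /andP[hr0 _] z /andP[hz1 _] bbar hbbar hcong T hT.
have rn0 : r != 0 by rewrite -cabs_eq0; exact: lt0r_neq0.
have sD0 : 0 < Num.sqrt Delta by rewrite sqrtr_gt0.
have zn0 : z != 0 by rewrite -cabs_eq0; apply: lt0r_neq0; exact: lt_le_trans hz1.
have [k0 hk0 ek] := hcong.
have hS' : forall q, S q -> cabs q <= Num.sqrt Q%:R by move=> q /hS[].
have [uT hT1 _ _] := hT.
rewrite mul1r /Pcount /ncard.
set PS := [set aq : CC * CC | _].
set F := fset_set PS.
have hF : forall x, x \in F -> [/\ isGI x.1, isGI x.2, x.2 != 0 & cabs x.2 <= Num.sqrt Q%:R].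
  by move=> x /mem_fset_setP [h1 h2 h3 h4]; have [h5 h6 h7] := hS _ h2; split.
have hF2 : forall x, x \in F -> [/\ S x.2, gcoprime x.1 x.2 & cabs (x.1 / x.2 - (b / r + z)) <= Num.sqrt Delta].
  by move=> x /mem_fset_setP [h1 h2 h3 h4].
pose mm := fun x : CC * CC => x.1 * r - b * x.2.
pose spec := fun x t => [/\ t \in T, t != 0, gdvd t x.2, gdvd t r & gcoprime (mm x / t) (r / t)].
pose tf := fun x => xget 0 (spec x).
have htf : forall x, x \in F -> spec x (tf x).
  move=> x /hF [h1 h2 h3 _]; apply: xgetPex.
  exact: (exists_t (a := x.1) hr rn0 h2 h3 h1 hb hbbar hk0 ek hT).
pose Ms := fun t : CC => fset_set [set m : CC | [/\ isGI m,
                           0 < cabs m <= 3 * cabs (r * z) * Num.sqrt (Q%:R) / cabs t &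
                           gcoprime m (r / t)]].
pose uu := fun t : CC => Num.sqrt (Q%:R * Delta) / (cabs z * cabs t).
pose yy := fun t m' : CC => proj (Num.sqrt Q%:R / cabs t) (m' / (r * z)).
pose Cs := fun t m' : CC => [set q | [/\ Sdiv S t q, cball (yy t m') (uu t) q & gcong q (- bbar * m') (r / t)]].
pose F1 := [seq x <- F | predC (fun x : CC * CC => (x.1 * r - b * x.2 == 0)%R) x].
have key : (size F <= 9 + \sum_(t <- T) \sum_(m <- Ms t) ncard1 (Cs t m))%N.
  rewrite -(count_predC (fun x : CC * CC => (x.1 * r - b * x.2 == 0)%R) F).
  apply: leq_add.
    rewrite -size_filter; apply: (count_m0 (bbar := bbar) (k0 := k0)) => //.
    - exact: fset_uniq.
    - by move=> x xF; have [? ? ? _] := hF x xF; have [_ ? _] := hF2 x xF; split.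
  rewrite -size_filter -/F1 -sum1_size.
  apply: (@leq_trans (\sum_(x <- F1) \sum_(t <- T) \sum_(m <- Ms t) ((tf x == t) && (mm x / t == m) : nat))).
    rewrite big_seq [X in (_ <= X)%N]big_seq; apply: leq_sum => x.
    rewrite mem_filter /= => /andP[mx0 xF].
    have [tT tn0' htq htr hco] := htf x xF.
    have [ha hq qn0 hqQ] := hF x xF.
    have [_ _ hc] := hF2 x xF.
    have [ht _] := hT1 _ tT.
    rewrite (bigD1_seq (tf x)) //=; apply: leq_trans (leq_addr _ _).
    have hMs : mm x / tf x \in Ms (tf x).
      rewrite in_fset_set; last first.
        apply: (sub_finite_set _ (finite_GI_ball (3 * cabs (r * z) * Num.sqrt Q%:R / cabs (tf x)))).
        by move=> w [hw /andP[_ hw2] _].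
      rewrite in_setE; split.
      - exact: m_GI.
      - apply/andP; split.
          apply: cabs_gt0; rewrite mulf_neq0 // invr_eq0 //.
        rewrite cabs_div ler_pM2r ?invr_gt0 ?cabs_gt0 //.
        apply: le_trans (m_bound qn0 rn0 hqQ hz1 hc) _.
        rewrite cabsM.
        have := mulr_ge0 (mulr_ge0 (cabs_ge0 r) (cabs_ge0 z)) (sqrtr_ge0 Q%:R).
        nra.
      exact: hco.
    rewrite (bigD1_seq (mm x / tf x)) ?fset_uniq //= !eqxx /=.
    exact: leq_addr.
  rewrite exchange_big /=; apply: leq_sum => t _.
  rewrite exchange_big /=; apply: leq_sum => m _.
  rewrite (eq_bigr (fun x => if (tf x == t) && (mm x / t == m) then 1 else 0)%N); last first.
    by move=> x _; case: ifP.
  rewrite -big_mkcond sum1_count -size_filter /ncard1.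
  have memx : forall x, x \in [seq x <- F1 | (tf x == t) && (mm x / t == m)] ->
      [/\ x \in F, spec x t & mm x / t = m].
    move=> x; rewrite !mem_filter => /andP[/andP[/eqP e1 /eqP e2] /andP[_ xF]].
    by split => //; rewrite -e1; apply: htf.
  have [t0|tn0'] := eqVneq t 0.
    case E: (filter _ F1) memx => [|x s'] // memx.
    have := memx x; rewrite inE eqxx => /(_ isT) [_ [_ tn1 _ _ _] _].
    by rewrite t0 eqxx in tn1.
  apply: (card_le_inj (f := fun x => x.2 / t)).
  - by rewrite !filter_uniq // fset_uniq.
  - move=> [a1 q1] [a2 q2] /memx [_ [_ tn1 _ _ _] em1] /memx [_ _ em2] /= e.
    have eq : q1 = q2 by move: e => /(congr1 (fun w => w * t)); rewrite !divfK.
    have em : mm (a1, q1) = mm (a2, q2).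
      by move: em1; rewrite -em2 => /(congr1 (fun w => w * t)); rewrite !divfK.
    move: em; rewrite /mm /= eq => /addIr /(mulIf rn0) ->; done.
  - move=> x /memx [xF [tT tn1 htq htr hco] em].
    have [ha hq qn0 hqQ] := hF x xF.
    have [hSx _ hc] := hF2 x xF.
    have [ht _] := hT1 _ tT.
    split.
    + split; first exact: GI_divt.
      by rewrite mulrC divfK.
    + rewrite /cball /yy /uu -em.
      have hR : 0 <= Num.sqrt Q%:R / cabs t by rewrite divr_ge0 ?sqrtr_ge0 ?cabs_ge0.
      apply: le_trans (proj_close _ hR _) _.
        by rewrite cabs_div ler_pM2r ?invr_gt0 ?cabs_gt0.
      exact: q_ball.
    + rewrite -em /mm /=; exact: (q_cong ha hbbar hk0 ht tn1 htq htr ek).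
  apply: (sub_finite_set _ (Sdiv_finite tn0' hS')).
  by move=> w [].
have tn0 : forall t, t \in T -> t != 0.
  move=> t /hT1 [_ [k _ ek']]; apply: contraNneq rn0 => t0; by rewrite ek' t0 mul0r.
apply: le_trans (_ : (size F)%:R <= (9 + \sum_(t <- T) \sum_(m <- Ms t) ncard1 (Cs t m))%:R) _.
  by rewrite ler_nat.
rewrite natrD; apply: lerD; first by rewrite ler_nat.
rewrite natr_sum big_seq [X in _ <= X]big_seq; apply: ler_sum => t tT.
rewrite natr_sum big_seq [X in _ <= X]big_seq; apply: ler_sum => m hm.
apply: ncard1_le_Acount; [exact: tn0 | exact: hS' |].
apply: proj_in; rewrite divr_ge0 ?sqrtr_ge0 ?cabs_ge0 //.
Qed.
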